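(* Let $T$ be a tree, $c:V(T)\to\mathbb{R}_{>0}$, and let $T'$ be a subtree of $T$ (with costs given by the restriction of $c$). Then $k(T',c)\le k(T,c)$.
   Context: For a tree $T$ with costs $c:V(T)\to\mathbb{R}_{>0}$ and $t\ge 0$, a heavy module with respect to $t$ is a set $H\subseteq V(T)$ such that $T[H]$ is connected, $c(v)>t$ for all $v\in H$, and $H$ is maximal with these properties. $k(T,c,t)$ is the number of heavy modules with respect to $t$, and $k(T,c)=\max_{t\ge 0}k(T,c,t)$. *)

(* Defs.v *)
From HB Require Import structures.
From mathcomp Require Import all_boot all_order all_algebra.
From mathcomp Require Import boolp reals.
Set Implicit Arguments. Unset Strict Implicit. Unset Printing Implicit Defensive.
Import Order.TTheory GRing.Theory Num.Theory.
Local Open Scope ring_scope.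

Section Defs.
Variable V : finType.

Definition simple_graph (e : rel V) : Prop := symmetric e /\ irreflexive e.

Definition connected_in (e : rel V) (S : {set V}) : Prop :=
  forall x y, x \in S -> y \in S ->
    exists p : seq V, [&& path e x p, last x p == y & all (fun v => v \in S) p].

Definition acyclic (e : rel V) : Prop :=
  forall (x : V) (p : seq V),
    ~ [&& (2 <= size p)%N, uniq (x :: p), path e x p & e (last x p) x].

Definition is_tree (e : rel V) : Prop :=
  simple_graph e /\ (0 < #|V|)%N /\ connected_in e [set: V] /\ acyclic e.

(* S induces a subtree of the tree (V,e): nonempty and T[S] connected
   (acyclicity is inherited) *)
Definition subtree_set (e : rel V) (S : {set V}) : Prop :=
  S != set0 /\ connected_in e S.

Variable R : realType.

Definition heavy_set (e : rel V) (S : {set V}) (c : V -> R) (t : R) (H : {set V}) : Prop :=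
  [/\ H \subset S, H != set0, connected_in e H & forall v, v \in H -> t < c v].

Definition heavy_module (e : rel V) (S : {set V}) (c : V -> R) (t : R) (H : {set V}) : Prop :=
  heavy_set e S c t H /\
  forall H' : {set V}, H \subset H' -> heavy_set e S c t H' -> H' = H.

Definition k_t (e : rel V) (S : {set V}) (c : V -> R) (t : R) : nat :=
  #|[set H : {set V} | `[< heavy_module e S c t H >]]|.

(* k(T[S], c) = max_{t >= 0} k(T[S], c, t); the values are bounded by #|V|,
   so this bounded maximum over attained values is the maximum. *)
Definition k_max (e : rel V) (S : {set V}) (c : V -> R) : nat :=
  \max_(n < #|V|.+1 | `[< exists2 t : R, 0 <= t & k_t e S c t = n >]) (n : nat).

End Defs.

(* Main.v *)
Require Import Defs.
From HB Require Import structures.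
From mathcomp Require Import all_boot all_order all_algebra.
From mathcomp Require Import boolp reals.
Import Order.TTheory GRing.Theory Num.Theory.
Set Implicit Arguments. Unset Strict Implicit. Unset Printing Implicit Defensive.

Section Tree.
Variables (V : finType) (e : rel V).
Hypothesis esym : symmetric e.
Hypothesis ac : acyclic e.

Lemma rev_rcons_path x q z : path e x (rcons q z) -> path e z (rcons (rev q) x).
Proof.
move=> h; have := rev_path e x (rcons q z).
rewrite last_rcons belast_rcons rev_cons => ->.
by rewrite (@eq_path _ _ e) // => a b; rewrite esym.
Qed.

Lemma uniq_path_unique x p q : uniq (x :: p) -> uniq (x :: q) ->
  path e x p -> path e x q -> last x p = last x q -> p = q.
Proof.
elim: p x q => [|a p IH] x q.
  case: q => [//|b q] _ /= /andP[xnq _] _ _ lq.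
  by rewrite lq mem_last in xnq.
case: q => [|b q].
  move=> /andP[xnp _] _ _ _ /= lq.
  by rewrite -lq mem_last in xnp.
case: (eqVneq a b) => [<-|ab].
  move=> /= /andP[_ up] /andP[_ uq] /andP[_ pp] /andP[_ pq] lq.
  rewrite (IH a q) //.
move=> up uq pp pq lq; exfalso.
have hP : has (mem (b :: q)) (a :: p).
  by apply/hasP; exists (last a p); [exact: mem_last | move: lq => /= ->; exact: mem_last].
have hab : head x (a :: p) != head x (b :: q) by [].
case: (split_find hP) up pp lq hab => z p1 p2 zQ hp1 up pp lq hab.
case/splitPr: zQ uq pq lq hab hp1 => q1 q2 uq pq lq hab hp1.
apply: (ac (x := x) (p := rcons p1 z ++ rev q1)).
have [xnP uP] : x \notin rcons p1 z ++ p2 /\ uniq (rcons p1 z ++ p2) by apply/andP.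
have [xnQ uQ] : x \notin q1 ++ z :: q2 /\ uniq (q1 ++ z :: q2) by apply/andP.
move: pp; rewrite cat_path => /andP[pp1 _].
move: pq; rewrite -cat_rcons cat_path => /andP[pq1 _].
have := rev_rcons_path pq1; rewrite rcons_path => /andP[prq ecl].
apply/and4P; split.
- rewrite size_cat size_rcons size_rev.
  by case: (p1) hab => [|? ?]; case: (q1) => [|? ?] //=; rewrite ?eqxx //; rewrite !addnS.
- rewrite /= mem_cat mem_rev negb_or cat_uniq rev_uniq.
  move: xnP xnQ; rewrite !mem_cat !negb_or => /andP[-> _] /andP[-> _] /=.
  move: uP uQ; rewrite !cat_uniq => /andP[-> _] /and3P[-> hq _] /=.
  rewrite andbT; apply/hasPn => v; rewrite mem_rev => vq1; rewrite mem_rcons inE negb_or.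
  apply/andP; split.
    by apply: contraNneq hq => <-; apply/hasP; exists v; rewrite ?inE ?eqxx.
  by apply/negP => vp1; move/hasPn: hp1 => /(_ v vp1); rewrite /= mem_cat vq1.
- by rewrite cat_path pp1 last_rcons prq.
- by rewrite last_cat last_rcons.
Qed.

Lemma walk_inter x y (A B : pred V) p q :
  path e x p -> last x p = y -> all A (x :: p) ->
  path e x q -> last x q = y -> all B q ->
  exists r, [/\ path e x r, last x r = y, all A r & all B r].
Proof.
move=> pp lp ap pq lq bq.
case: (shortenP pp) lp => p' pp' up' sp' lp.
case: (shortenP pq) lq => q' pq' uq' sq' lq.
have eq : p' = q'.
  by apply: (@uniq_path_unique x) => //; rewrite lq.
exists p'; split => //.
  by apply/allP => v /sp' vp; move/allP: ap; apply; rewrite inE vp orbT.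
by rewrite eq; apply/allP => v /sq' vq; move/allP: bq; apply.
Qed.
End Tree.

Section Heavy.
Variables (R : realType) (V : finType) (e : rel V) (c : V -> R).
Hypothesis esym : symmetric e.
Local Open Scope ring_scope.

Definition er (P : pred V) : rel V := fun x y => [&& e x y, P x & P y].

Lemma er_sym (P : pred V) : symmetric (er P).
Proof. by move=> x y; rewrite /er esym; case: (P x); case: (P y). Qed.

Lemma er_path (P : pred V) x p : path e x p -> P x -> all P p -> path (er P) x p.
Proof.
elim: p x => //= y p IH x /andP[exy pp] Px /andP[Py ap].
by rewrite /er exy Px Py /=; apply: IH.
Qed.

Lemma path_er (P : pred V) x p : path (er P) x p -> path e x p && all P p.
Proof.
elim: p x => //= y p IH x /andP[/and3P[exy _ Py] pp].
by rewrite exy Py /=; apply: IH.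
Qed.

Lemma connect_er_P (P : pred V) x y : P x -> connect (er P) x y -> P y.
Proof.
move=> Px /connectP[p pp ->]; move/path_er: pp => /andP[_ ap].
have : all P (x :: p) by rewrite /= Px.
by move/allP; apply; exact: mem_last.
Qed.

Definition PS (S : {set V}) (t : R) : pred V := fun v => (v \in S) && (t < c v).
Definition comp (S : {set V}) (t : R) x := [set y | connect (er (PS S t)) x y].

Lemma comp_module (S : {set V}) (t : R) x : x \in S -> t < c x -> heavy_module e S c t (comp S t x).
Proof.
move=> xS ctx; have Px : PS S t x by rewrite /PS xS ctx.
have hs : heavy_set e S c t (comp S t x).
  split.
  - by apply/subsetP => y; rewrite inE => /(connect_er_P Px) /andP[].
  - by apply/set0Pn; exists x; rewrite inE connect0.
  - move=> y z; rewrite !inE => xy xz.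
    have yz : connect (er (PS S t)) y z.
      by apply: connect_trans xz; rewrite (sym_connect_sym (@er_sym _)).
    case/connectP: yz => p pp lz; exists p.
    move/path_er: (pp) => /andP[-> _]; rewrite -lz eqxx /=.
    apply/allP => v vp; rewrite inE; apply: connect_trans xy _.
    by apply: (path_connect pp); rewrite inE vp orbT.
  - by move=> v; rewrite inE => /(connect_er_P Px) /andP[].
split => // H' sub [sH' _ cH' gt].
apply/eqP; rewrite eqEsubset sub andbT; apply/subsetP => y yH'.
have xH' : x \in H' by apply: (subsetP sub); rewrite inE connect0.
case: (cH' x y xH' yH') => p /and3P[pp /eqP ly ap].
rewrite inE; apply/connectP; exists p => //; apply: er_path => //.
apply/allP => v vp; have vH' : v \in H' by apply: (allP ap).
by rewrite /PS (subsetP sH') // gt.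
Qed.

Lemma module_comp (S : {set V}) (t : R) (H : {set V}) x : heavy_module e S c t H -> x \in H -> H = comp S t x.
Proof.
move=> [[sHS Hn cH gt] mx] xH.
have xS : x \in S by apply: (subsetP sHS).
symmetry; apply: mx; last by case: (comp_module xS (gt x xH)).
apply/subsetP => y yH; case: (cH x y xH yH) => p /and3P[pp /eqP ly ap].
rewrite inE; apply/connectP; exists p => //; apply: er_path => //.
  by rewrite /PS xS gt.
apply/allP => v vp; have vH : v \in H by apply: (allP ap).
by rewrite /PS (subsetP sHS) // gt.
Qed.


Hypothesis ac : acyclic e.

Definition PV (t : R) : pred V := PS [set: V] t.

Lemma kt_le (S : {set V}) (t : R) : connected_in e S ->
  (k_t e S c t <= k_t e [set: V] c t)%N.
Proof.
move=> cS.
pose g (H : {set V}) := if [pick x in H] is Some x then comp [set: V] t x else set0.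
have key : forall (S' : {set V}) H, heavy_module e S' c t H ->
    exists2 x, x \in H & g H = comp [set: V] t x.
  move=> S' H [[_ Hn _ _] _]; rewrite /g; case: pickP => [x xH|none].
    by exists x.
  by case/set0Pn: Hn => x; rewrite none.
rewrite /k_t -(@card_in_imset _ _ g).
  apply: subset_leq_card; apply/subsetP => _ /imsetP[H HH ->].
  move: HH; rewrite inE => /asboolP HH; rewrite inE; apply/asboolP.
  case: (key _ _ HH) => x xH ->; apply: comp_module; first by rewrite inE.
  by case: HH => [[_ _ _ gt] _]; apply: gt.
move=> H1 H2; rewrite !inE => /asboolP h1 /asboolP h2.
case: (key _ _ h1) => x1 x1H ->; case: (key _ _ h2) => x2 x2H -> eqc.
rewrite (module_comp h1 x1H) (module_comp h2 x2H).
case: h1 => [[sH1 _ _ gt1] _]; case: h2 => [[sH2 _ _ gt2] _].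
have x1S : x1 \in S by apply: (subsetP sH1).
have x2S : x2 \in S by apply: (subsetP sH2).
have : x2 \in comp [set: V] t x1 by rewrite eqc inE connect0.
rewrite inE => /connectP[p pp lp].
move/path_er: (pp) => /andP[ppe ap].
case: (cS x1 x2 x1S x2S) => q /and3P[pq /eqP lq aq].
have a1 : all (PV t) (x1 :: p) by rewrite /= ap andbT /PV /PS inE gt1.
have [r [pr lr ar br]] := @walk_inter V e esym ac x1 x2 (PV t) (mem S) p q ppe (Logic.eq_sym lp)
  a1 pq lq aq.
have cx : connect (er (PS S t)) x1 x2.
  apply/connectP; exists r => //; apply: er_path => //.
    by rewrite /PS x1S gt1.
  apply/allP => v vr; rewrite /PS (allP br v vr : v \in S).
  by move: (allP ar v vr); rewrite /PV /PS => /andP[].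
apply/setP => y; rewrite !inE.
by apply: (same_connect (sym_connect_sym (@er_sym _))).
Qed.

Lemma kt_bound (t : R) : (0 < #|V|)%N -> (k_t e [set: V] c t <= #|V|)%N.
Proof.
case/card_gt0P => x0 _.
rewrite /k_t; apply: (leq_card_in (fun H : {set V} => odflt x0 [pick x in H])).
move=> H1 H2; rewrite !inE => /asboolP h1 /asboolP h2.
have ex : forall H, heavy_module e [set: V] c t H ->
    exists2 x, x \in H & odflt x0 [pick x in H] = x.
  move=> H [[_ Hn _ _] _]; case: pickP => [x xH|none]; first by exists x.
  by case/set0Pn: Hn => x; rewrite none.
case: (ex _ h1) => x1 x1H ->; case: (ex _ h2) => x2 x2H -> e12.
by rewrite (module_comp h1 x1H) (module_comp h2 x2H) e12.
Qed.

End Heavy.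

Local Open Scope ring_scope.

Theorem mainTheorem2 (R : realType) (V : finType) (e : rel V) (c : V -> R)
    (S : {set V}) :
  is_tree e -> (forall v, 0 < c v) -> subtree_set e S ->
  (k_max e S c <= k_max e [set: V] c)%N.
Proof.
move=> [[esym _] [V0 [_ ac]]] _ [_ cS].
rewrite /k_max; apply/bigmax_leqP => n /asboolP [t t0 kt].
rewrite -kt; apply: leq_trans (kt_le c esym ac t cS) _.
have hb : (k_t e [set: V] c t < #|V|.+1)%N by rewrite ltnS kt_bound.
apply: (@leq_bigmax_cond _ _ (fun n : 'I_#|V|.+1 => (n : nat)) (Ordinal hb)).
by apply/asboolP; exists t.
Qed.
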